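(* Let $k\ge1$ (possibly $k=\infty$), let $n_i$ ($1\le i\le k$) be positive integers, and let $\mathbb F_\theta^+$ be the single-vertex $k$-graph underlying the standard product of the odometers $\{(\mathbb Z,[n_i])\}_{i=1}^k$. The following are equivalent: (1) the $n_i$ are pairwise coprime; (2) for all $1\le i<j\le k$ and $(\mathfrak s,\mathfrak t')\in[n_i]\times[n_j]$ there is a unique $(\mathfrak s',\mathfrak t)\in[n_i]\times[n_j]$ with $x^i_{\mathfrak s}x^j_{\mathfrak t}=x^j_{\mathfrak t'}x^i_{\mathfrak s'}$; (3) any two $\mu,\nu\in\mathbb F_\theta^+$ having a right common multiple have a unique right least common multiple, and it has degree $d(\mu)\vee d(\nu)$; (4) $\mathbb F_\theta^+$ is right LCM.
   Context: $[m]=\{0,\dots,m-1\}$. $\mathbb F_\theta^+$ is the monoid generated by $x^i_{\mathfrak s}$ ($1\le i\le k$, $\mathfrak s\in[n_i]$) subject to $x^i_{\mathfrak s}x^j_{\mathfrak t}=x^j_{\mathfrak t'}x^i_{\mathfrak s'}$ for $i<j$ whenever $\mathfrak s+\mathfrak tn_i=\mathfrak t'+\mathfrak s'n_j$ ($\mathfrak s,\mathfrak s'\in[n_i]$, $\mathfrak t,\mathfrak t'\in[n_j]$); it is a single-vertex $k$-graph with degree map $d(x^i_{\mathfrak s})=e_i\in\mathbb N^k$ (unique factorization holds). $p$ is a right multiple of $q$ if $p=qr$ for some $r$; a monoid is right LCM if any two elements having a right common multiple have a right least common multiple (a common right multiple of which every common right multiple is a right multiple). *)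

(* Defs.v *)
From mathcomp Require Import all_boot.
Set Implicit Arguments. Unset Strict Implicit. Unset Printing Implicit Defensive.

(* Number of colours: [Some k] means k colours (indexed 0..k-1, i.e. colour
   i here is colour i+1 of the paper); [None] means k = infinity (colours
   indexed by all of nat). *)
Definition color_ok (k : option nat) (i : nat) : bool :=
  if k is Some k' then i < k' else true.

(* A generator x^i_s is encoded as the pair (i, s). *)
Definition gen := (nat * nat)%type.

Definition valid_gen (k : option nat) (n : nat -> nat) (g : gen) : bool :=
  color_ok k g.1 && (g.2 < n g.1).

Definition valid_word (k : option nat) (n : nat -> nat) (w : seq gen) : bool :=
  all (valid_gen k n) w.

Definition odo_rel (k : option nat) (n : nat -> nat) (a b c d : gen) : Prop :=
  exists i j s t t' s',
    [/\ [/\ a = (i, s), b = (j, t), c = (j, t') & d = (i, s')],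
        [/\ i < j, color_ok k i & color_ok k j],
        [/\ s < n i, s' < n i, t < n j & t' < n j] &
        s + t * n i = t' + s' * n j].

(* The monoid congruence on words generated by the defining relations:
   equality in F_theta^+ of the elements represented by two words. *)
Inductive meq (k : option nat) (n : nat -> nat) : seq gen -> seq gen -> Prop :=
| meq_refl w : meq k n w w
| meq_sym u v : meq k n u v -> meq k n v u
| meq_trans u v w : meq k n u v -> meq k n v w -> meq k n u w
| meq_step w1 w2 a b c d : odo_rel k n a b c d ->
    meq k n (w1 ++ [:: a; b] ++ w2) (w1 ++ [:: c; d] ++ w2).

(* degree d(w) in N^k, as a (finitely supported) function of the colour *)
Definition deg (w : seq gen) (i : nat) : nat := count (fun g => g.1 == i) w.

Definition right_multiple k n (p q : seq gen) : Prop :=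
  exists2 r, valid_word k n r & meq k n p (q ++ r).

Definition right_common_multiple k n (m mu nu : seq gen) : Prop :=
  [/\ valid_word k n m, right_multiple k n m mu & right_multiple k n m nu].

Definition right_lcm k n (l mu nu : seq gen) : Prop :=
  right_common_multiple k n l mu nu /\
  forall m, right_common_multiple k n m mu nu -> right_multiple k n m l.

Definition right_LCM_monoid k n : Prop :=
  forall mu nu, valid_word k n mu -> valid_word k n nu ->
    (exists m, right_common_multiple k n m mu nu) ->
    exists l, right_lcm k n l mu nu.

(* Main.v *)
Require Import Defs.
From mathcomp Require Import all_boot.
From mathcomp Require Import zify.
Set Implicit Arguments. Unset Strict Implicit. Unset Printing Implicit Defensive.

Definition Nv (n : nat -> nat) (w : seq gen) : nat :=
  foldr (fun g acc => g.2 + n g.1 * acc) 0 w.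
Definition Pc (n : nat -> nat) (cs : seq nat) : nat := \prod_(c <- cs) n c.
Fixpoint mk (n : nat -> nat) (cs : seq nat) (N : nat) : seq gen :=
  if cs is c :: cs' then (c, N %% n c) :: mk n cs' (N %/ n c) else [::].
Definition cols (w : seq gen) : seq nat := map fst w.
Fixpoint sdiff (s t : seq nat) : seq nat :=
  if t is y :: t' then rem y (sdiff s t') else s.

Lemma Pc_nil n : Pc n [::] = 1. Proof. by rewrite /Pc big_nil. Qed.
Lemma Pc_cons n c s : Pc n (c :: s) = n c * Pc n s. Proof. by rewrite /Pc big_cons. Qed.
Lemma Pc_cat n s t : Pc n (s ++ t) = Pc n s * Pc n t. Proof. by rewrite /Pc big_cat. Qed.
Lemma Pc_perm n s t : perm_eq s t -> Pc n s = Pc n t. Proof. exact: perm_big. Qed.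

Lemma Nv_cat n u v : Nv n (u ++ v) = Nv n u + Pc n (cols u) * Nv n v.
Proof.
elim: u => [|g u IH] /=; first by rewrite Pc_nil mul1n.
by rewrite IH Pc_cons mulnDr addnA mulnA.
Qed.

Lemma cnt_sdiff x s t : count_mem x (sdiff s t) = count_mem x s - count_mem x t.
Proof.
elim: t => [|y t IH] /=; first by rewrite subn0.
rewrite count_mem_rem IH /=; lia.
Qed.

Lemma perm_counts (s t : seq nat) :
  (forall x, count_mem x s = count_mem x t) -> perm_eq s t.
Proof. move=> H; rewrite /perm_eq; apply/allP => x _ /=; by rewrite H. Qed.

Lemma count_perm (s t : seq nat) x : perm_eq s t -> count_mem x s = count_mem x t.
Proof. by move/permP => ->. Qed.

Lemma perm_sdiff (s t : seq nat) :
  (forall x, count_mem x s <= count_mem x t) -> perm_eq t (s ++ sdiff t s).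
Proof.
move=> H; apply: perm_counts => x; rewrite count_cat cnt_sdiff.
by rewrite subnKC.
Qed.

Lemma Pc_dvd n (s t : seq nat) :
  (forall x, count_mem x s <= count_mem x t) -> Pc n s %| Pc n t.
Proof.
move=> /perm_sdiff /(Pc_perm n) ->; rewrite Pc_cat; exact: dvdn_mulr.
Qed.

Lemma deg_cols w i : deg w i = count_mem i (cols w).
Proof. by rewrite /deg /cols count_map. Qed.

Lemma valid_cols k n w : valid_word k n w -> all (color_ok k) (cols w).
Proof. elim: w => [|g w IH] //= /andP [/andP [H1 _] H2]; by rewrite H1 IH. Qed.

Lemma Pc_gt0 k n (hn : forall i, color_ok k i -> 0 < n i) s :
  all (color_ok k) s -> 0 < Pc n s.
Proof.
elim: s => [|c s IH] /=; first by rewrite Pc_nil.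
move=> /andP [H1 H2]; rewrite Pc_cons muln_gt0 hn //; exact: IH.
Qed.

Lemma Nv_lt k n (hn : forall i, color_ok k i -> 0 < n i) w :
  valid_word k n w -> Nv n w < Pc n (cols w).
Proof.
elim: w => [|[c d] w IH] /=; first by rewrite Pc_nil.
move=> /andP [/andP [H1 H2] H3]; rewrite Pc_cons.
have := IH H3; move: H2 => /= H2 H4. nia.
Qed.

Lemma cols_mk n cs N : cols (mk n cs N) = cs.
Proof. by elim: cs N => [|c cs IH] N //=; rewrite IH. Qed.

Lemma valid_mk k n (hn : forall i, color_ok k i -> 0 < n i) cs N :
  all (color_ok k) cs -> valid_word k n (mk n cs N).
Proof.
elim: cs N => [|c cs IH] N //= /andP [H1 H2].
by rewrite /valid_gen /= H1 ltn_pmod ?hn // IH.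
Qed.

Lemma Nv_mk k n (hn : forall i, color_ok k i -> 0 < n i) cs N :
  all (color_ok k) cs -> N < Pc n cs -> Nv n (mk n cs N) = N.
Proof.
elim: cs N => [|c cs IH] N /=; first by rewrite Pc_nil; case: N.
move=> /andP [H1 H2]; rewrite Pc_cons => HN.
have hc := hn _ H1.
rewrite IH //; last by rewrite ltn_divLR // mulnC.
by rewrite [in RHS](divn_eq N (n c)) addnC mulnC.
Qed.

Lemma meq_catl k n p u v : meq k n u v -> meq k n (p ++ u) (p ++ v).
Proof.
elim=> [w|u' v' _ IH|u' v' w _ IH1 _ IH2|w1 w2 a b c d H].
- exact: meq_refl.
- exact: meq_sym.
- exact: meq_trans IH2.
- rewrite !(catA p w1); exact: meq_step.
Qed.

Lemma meq_inv k n u v : meq k n u v ->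
  [/\ Nv n u = Nv n v, perm_eq (cols u) (cols v) & valid_word k n u = valid_word k n v].
Proof.
elim=> [w|u' v' _ [IH1 IH2 IH3]|u' v' w _ [A1 A2 A3] _ [B1 B2 B3]|w1 w2 a b c d H].
- by split.
- by split; rewrite // perm_sym.
- by split; [rewrite A1 | apply: perm_trans B2 | rewrite A3].
- case: H => [i [j [s [t [t' [s' [[-> -> -> ->] [Hij Hi Hj] [H1 H2 H3 H4] E]]]]]]].
  split.
  + rewrite !Nv_cat /= !Pc_cons Pc_nil !muln0 !addn0 [n j * _]mulnC; congr (_ + _ * (_ + _)); nia.
  + rewrite /cols !map_cat; apply: perm_cat => //=.
    apply: perm_counts => x /=; lia.
  + rewrite /valid_word !all_cat /= /valid_gen /= Hi Hj H1 H2 H3 H4.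
    done.
Qed.

Lemma odo_swap k n (hn : forall i, color_ok k i -> 0 < n i) i j t' s' :
  i < j -> color_ok k i -> color_ok k j -> t' < n j -> s' < n i ->
  odo_rel k n (i, (t' + s' * n j) %% n i) (j, (t' + s' * n j) %/ n i) (j, t') (i, s').
Proof.
move=> Hij Hi Hj H3 H4.
exists i, j, ((t' + s' * n j) %% n i), ((t' + s' * n j) %/ n i), t', s'.
have hi := hn _ Hi; have hj := hn _ Hj.
split; [by [] | by [] | split => // | ].
- by rewrite ltn_pmod.
- rewrite ltn_divLR //; nia.
- by rewrite addnC -(divn_eq (t' + s' * n j) (n i)).
Qed.

Lemma insert_sorted k n (hn : forall i, color_ok k i -> 0 < n i) w g :
  valid_gen k n g -> valid_word k n w -> sorted leq (cols w) ->
  exists w', [/\ valid_word k n w', sorted leq (cols w') & meq k n (g :: w) w'].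
Proof.
elim: w g => [|h w IH] g Hg Hw Hs.
  by exists [:: g]; split => //=; [rewrite /valid_word /= Hg | apply: meq_refl].
case: (leqP g.1 h.1) => Hgh.
  exists (g :: h :: w); split => //; last exact: meq_refl.
  - by rewrite /valid_word /= Hg.
  - by move: Hs; rewrite /= Hgh.
move: Hg Hw Hs; case: g Hgh => [j t'] /=; case: h => [i s'] /= Hij.
rewrite /valid_word /= /valid_gen /= => /andP [Hj H3] /andP [/andP [Hi H4] Hw] Hs.
have Ho := odo_swap hn Hij Hi Hj H3 H4.
set s := (t' + s' * n j) %% n i in Ho; set t := (t' + s' * n j) %/ n i in Ho.
have hi := hn _ Hi; have hj := hn _ Hj.
have Hs1 : s < n i by rewrite ltn_pmod.
have Ht1 : t < n j by rewrite ltn_divLR //; nia.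
have Hsw : sorted leq (cols w) by move: Hs => /path_sorted.
have [w'' [V S M]] := IH (j, t) (ltac:(by rewrite /valid_gen /= Hj Ht1)) Hw Hsw.
exists ((i, s) :: w''); split.
- by rewrite /valid_word /= /valid_gen /= Hi Hs1.
- rewrite /= path_sortedE; last exact: leq_trans.
  rewrite S andbT.
  have [_ P _] := meq_inv M.
  rewrite -(perm_all _ P) /= (ltnW Hij) /=.
  by move: Hs; rewrite /= path_sortedE; [case/andP | exact: leq_trans].
- apply: meq_trans; first exact: (meq_sym (meq_step [::] w Ho)).
  exact: (meq_catl [:: (i, s)] M).
Qed.

Lemma sort_ex k n (hn : forall i, color_ok k i -> 0 < n i) w :
  valid_word k n w ->
  exists w', [/\ valid_word k n w', sorted leq (cols w') & meq k n w w'].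
Proof.
elim: w => [|g w IH]; first by exists [::]; split => //; apply: meq_refl.
rewrite /valid_word /= => /andP [Hg Hw].
have [w1 [V1 S1 M1]] := IH Hw.
have [w2 [V2 S2 M2]] := insert_sorted hn Hg V1 S1.
exists w2; split => //; apply: meq_trans M2; exact: (meq_catl [:: g] M1).
Qed.

Lemma digits_eq (a b x y d : nat) : a < d -> b < d -> a + d * x = b + d * y ->
  a = b /\ x = y.
Proof.
move=> Ha Hb E; case: (ltngtP x y) => H.
- exfalso; nia.
- exfalso; nia.
- subst; split => //; lia.
Qed.

Lemma cols_eq_uniq k n (hn : forall i, color_ok k i -> 0 < n i) u v :
  cols u = cols v -> valid_word k n u -> valid_word k n v -> Nv n u = Nv n v -> u = v.
Proof.
elim: u v => [|[c d] u IH] [|[c' d'] v] //= [Ec Ecs].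
rewrite /valid_word /= /valid_gen /= => /andP [/andP [Hc Hd] Hu] /andP [/andP [_ Hd'] Hv].
subst c' => E.
have [-> E2] := digits_eq Hd Hd' E.
by rewrite (IH v).
Qed.

Lemma complete k n (hn : forall i, color_ok k i -> 0 < n i) u v :
  valid_word k n u -> valid_word k n v -> perm_eq (cols u) (cols v) ->
  Nv n u = Nv n v -> meq k n u v.
Proof.
move=> Hu Hv P E.
have [u' [Vu Su Mu]] := sort_ex hn Hu.
have [v' [Vv Sv Mv]] := sort_ex hn Hv.
have [Eu Pu _] := meq_inv Mu; have [Ev Pv _] := meq_inv Mv.
have Ec : cols u' = cols v'.
  apply: (sorted_eq leq_trans anti_leq Su Sv).
  by apply: perm_trans (perm_trans _ P) Pv; rewrite perm_sym.
have := cols_eq_uniq hn Ec Vu Vv; rewrite -Eu -Ev => /(_ E) Euv.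
apply: meq_trans Mu _; rewrite Euv; exact: meq_sym.
Qed.

Lemma rm_char k n (hn : forall i, color_ok k i -> 0 < n i) p q :
  valid_word k n p -> valid_word k n q ->
  right_multiple k n p q <->
  (forall x, count_mem x (cols q) <= count_mem x (cols p)) /\
  Nv n p %% Pc n (cols q) = Nv n q.
Proof.
move=> Hp Hq; split.
- case=> r Hr M; have [E P _] := meq_inv M.
  split.
  + move=> x; rewrite (count_perm x P) /cols map_cat count_cat; exact: leq_addr.
  + rewrite E Nv_cat (mulnC (Pc n (cols q))) addnC; have := modnMDl (Nv n r) (Nv n q) (Pc n (cols q)); move=> ->; apply: modn_small; exact: (@Nv_lt _ _ hn _ Hq).
- case=> C E.
  set rc := sdiff (cols p) (cols q).
  have P := perm_sdiff C.
  have Aq := valid_cols Hq; have Ap := valid_cols Hp.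
  have Arc : all (color_ok k) rc.
    by move: Ap; rewrite (perm_all _ P) all_cat => /andP [].
  have Pq := Pc_gt0 hn Aq.
  exists (mk n rc (Nv n p %/ Pc n (cols q))); first exact: valid_mk.
  apply: complete => //.
  + by rewrite /valid_word all_cat; apply/andP; split; [exact: Hq | apply: valid_mk].
  + by rewrite {2}/cols map_cat -/(cols (mk _ _ _)) cols_mk.
  + rewrite Nv_cat (Nv_mk hn) //; last first.
      rewrite ltn_divLR // mulnC -Pc_cat -(Pc_perm n P); exact: (@Nv_lt _ _ hn _ Hp).
    by rewrite [in LHS](divn_eq (Nv n p) (Pc n (cols q))) E addnC mulnC.
Qed.

Lemma cnt_filt (x c : nat) s :
  count_mem x (filter (predC1 c) s) = (x != c) * count_mem x s.
Proof.
elim: s => [|y s IH] /=; first by rewrite muln0.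
case: (eqVneq y c) => [->|Hyc] /=.
  rewrite IH; case: (eqVneq x c) => [->|Hxc] /=; first by rewrite !mul0n.
  by rewrite add0n.
rewrite IH; case: (eqVneq x c) => [->|Hxc] /=; first by rewrite (negbTE Hyc) !mul0n.
by rewrite !mul1n.
Qed.

Lemma Pc_split n c (s : seq nat) :
  Pc n s = n c ^ count_mem c s * Pc n (filter (predC1 c) s).
Proof.
elim: s => [|x s IH] /=; first by rewrite Pc_nil.
case: (eqVneq x c) => [->|Hxc] /=.
  by rewrite Pc_cons IH expnS mulnA.
by rewrite !Pc_cons IH mulnCA.
Qed.

Lemma all_filt (T : Type) (a p : pred T) s : all a s -> all a (filter p s).
Proof. elim: s => //= x s IH /andP [H1 H2]; case: (p x) => /=; rewrite ?H1 IH //. Qed.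

Lemma coprime_Pc n c (s : seq nat) :
  (forall x, x \in s -> coprime (n c) (n x)) -> coprime (n c) (Pc n s).
Proof.
elim: s => [|x s IH] H; first by rewrite Pc_nil coprimen1.
rewrite Pc_cons coprimeMr H ?mem_head // IH // => y Hy.
by apply: H; rewrite inE Hy orbT.
Qed.

Lemma mem_cnt (x : nat) s : (x \in s) = (0 < count_mem x s).
Proof. by rewrite -has_pred1 has_count. Qed.

Lemma lcm_mod k n
  (hcop : forall i j, color_ok k i -> color_ok k j -> i != j -> coprime (n i) (n j))
  (s t u : seq nat) x y :
  all (color_ok k) (s ++ t) ->
  (forall z, count_mem z u = maxn (count_mem z s) (count_mem z t)) ->
  x = y %[mod Pc n s] -> x = y %[mod Pc n t] -> x = y %[mod Pc n u].
Proof.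
have [m Hm] := ubnP (size s).
elim: m s t u Hm => // m IH [|c s0] t u Hs A Cu Es Et.
  rewrite (Pc_perm n (_ : perm_eq u t)) //.
  by apply: perm_counts => z; rewrite Cu /= max0n.
have Hc : color_ok k c by move: A => /andP [].
have cop : forall v, all (color_ok k) v ->
    coprime (n c) (Pc n (filter (predC1 c) v)).
  move=> v Av; apply: coprime_Pc => z; rewrite mem_filter => /andP [Hz Hzv].
  apply: hcop => //; first by move/allP: Av; apply.
  by rewrite eq_sym.
move: A; rewrite all_cat => /andP [As At].
set s' := filter (predC1 c) (c :: s0).
set t' := filter (predC1 c) t.
set u' := filter (predC1 c) u.
have Au : all (color_ok k) u.
  apply/allP => z; rewrite mem_cnt Cu => Hz.
  case: (leqP (count_mem z (c :: s0)) (count_mem z t)) => H.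
    move: Hz; rewrite (maxn_idPr H) -mem_cnt => Hz; by move/allP: At; apply.
  move: Hz; rewrite (maxn_idPl (ltnW H)) -mem_cnt => Hz; by move/allP: As; apply.
have IH' : x = y %[mod Pc n u'].
  apply: (IH s' t').
  - rewrite /s' /= eqxx /= size_filter; apply: leq_ltn_trans (count_size _ _) _.
    by move: Hs; rewrite ltnS.
  - by rewrite all_cat !all_filt.
  - by move=> z; rewrite !cnt_filt Cu; case: (z != c); rewrite ?mul1n ?mul0n.
  - apply/eqP; move/eqP: Es; rewrite (Pc_split n c (c :: s0)) chinese_remainder.
      by case/andP.
    by apply: coprimeXl; apply: cop.
  - apply/eqP; move/eqP: Et; rewrite (Pc_split n c t) chinese_remainder.
      by case/andP.
    by apply: coprimeXl; apply: cop.
have Ec : x = y %[mod n c ^ count_mem c u].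
  rewrite Cu.
  case: (leqP (count_mem c (c :: s0)) (count_mem c t)) => H.
    apply/eqP; move/eqP: Et.
    rewrite (Pc_split n c t) chinese_remainder; first by case/andP.
    by apply: coprimeXl; apply: cop.
  apply/eqP; move/eqP: Es.
  rewrite (Pc_split n c (c :: s0)) chinese_remainder; first by case/andP.
  by apply: coprimeXl; apply: cop.
apply/eqP; rewrite (Pc_split n c u) chinese_remainder; last first.
  by apply: coprimeXl; apply: cop.
by rewrite Ec IH' !eqxx.
Qed.

Lemma meq2 k n (hn : forall i, color_ok k i -> 0 < n i) i j s t t' s' :
  i < j -> color_ok k i -> color_ok k j ->
  s < n i -> t < n j -> t' < n j -> s' < n i ->
  meq k n [:: (i, s); (j, t)] [:: (j, t'); (i, s')] <->
  s + n i * t = t' + n j * s'.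
Proof.
move=> Hij Hi Hj H1 H2 H3 H4; split.
- case/meq_inv => /= E _ _; move: E; rewrite !muln0 !addn0 => ->; done.
- move=> E; apply: (meq_step [::] [::]).
  exists i, j, s, t, t', s'; split => //.
  by rewrite [t * _]mulnC [s' * _]mulnC.
Qed.

Lemma all_sub_cnt (a : pred nat) (s t : seq nat) :
  all a t -> (forall x, count_mem x s <= count_mem x t) -> all a s.
Proof.
move=> /allP A C; apply/allP => x; rewrite mem_cnt => Hx.
apply: A; rewrite mem_cnt; exact: leq_trans Hx (C x).
Qed.

Lemma p1p3 k n (hn : forall i, color_ok k i -> 0 < n i)
  (hcop : forall i j, color_ok k i -> color_ok k j -> i != j -> coprime (n i) (n j))
  mu nu : valid_word k n mu -> valid_word k n nu ->
  (exists m, right_common_multiple k n m mu nu) ->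
  exists l, [/\ right_lcm k n l mu nu,
                (forall l', right_lcm k n l' mu nu -> meq k n l' l) &
                (forall i, deg l i = maxn (deg mu i) (deg nu i))].
Proof.
move=> Hmu Hnu [m [Hm Rmu Rnu]].
have [Cmu Emu] := (rm_char hn Hm Hmu).1 Rmu.
have [Cnu Enu] := (rm_char hn Hm Hnu).1 Rnu.
set cl := cols mu ++ sdiff (cols nu) (cols mu).
have Ccl : forall x, count_mem x cl =
    maxn (count_mem x (cols mu)) (count_mem x (cols nu)).
  by move=> x; rewrite count_cat cnt_sdiff maxnE.
have Amn : all (color_ok k) (cols mu ++ cols nu).
  by rewrite all_cat (valid_cols Hmu) (valid_cols Hnu).
have Acl : all (color_ok k) cl.
  rewrite all_cat (valid_cols Hmu) /=; apply: (all_sub_cnt (valid_cols Hnu)).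
  by move=> x; rewrite cnt_sdiff leq_subr.
have Plpos := Pc_gt0 hn Acl.
set l := mk n cl (Nv n m %% Pc n cl).
have Vl : valid_word k n l by apply: valid_mk.
have Cl : cols l = cl by rewrite cols_mk.
have Nl : Nv n l = Nv n m %% Pc n cl by rewrite (Nv_mk hn) // ltn_pmod.
have key : forall m', right_common_multiple k n m' mu nu -> right_multiple k n m' l.
  move=> m' [Hm' R1 R2].
  have [C1 E1] := (rm_char hn Hm' Hmu).1 R1.
  have [C2 E2] := (rm_char hn Hm' Hnu).1 R2.
  apply/(rm_char hn Hm' Vl); split.
    by move=> x; rewrite Cl Ccl geq_max C1 C2.
  rewrite Cl Nl.
  apply: (lcm_mod hcop Amn Ccl); [by rewrite E1 Emu | by rewrite E2 Enu].
have Rl : right_multiple k n l mu /\ right_multiple k n l nu.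
  split.
    apply/(rm_char hn Vl Hmu); split; first by move=> x; rewrite Cl Ccl leq_maxl.
    rewrite Nl (modn_dvdm (Nv n m) (_ : Pc n (cols mu) %| Pc n cl)) ?Emu //.
    by apply: Pc_dvd => x; rewrite Ccl leq_maxl.
  apply/(rm_char hn Vl Hnu); split; first by move=> x; rewrite Cl Ccl leq_maxr.
  rewrite Nl (modn_dvdm (Nv n m) (_ : Pc n (cols nu) %| Pc n cl)) ?Enu //.
  by apply: Pc_dvd => x; rewrite Ccl leq_maxr.
have RL : right_lcm k n l mu nu by split; [split; case: Rl | exact: key].
exists l; split => //.
- move=> l' [[Hl' R1' R2'] Hlcm'].
  have R := key l' (And3 Hl' R1' R2').
  have R' := Hlcm' l RL.1.
  have [C1 E1] := (rm_char hn Hl' Vl).1 R.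
  have [C2 E2] := (rm_char hn Vl Hl').1 R'.
  have P : perm_eq (cols l') (cols l).
    by apply: perm_counts => x; apply/eqP; rewrite eqn_leq C1 C2.
  apply: complete => //.
  rewrite -E1 modn_small // -(Pc_perm n P); exact: (@Nv_lt _ _ hn _ Hl').
- by move=> i; rewrite !deg_cols Cl Ccl.
Qed.

Lemma lcm_facts a b : 0 < a -> 0 < b -> ~~ coprime a b ->
  0 < lcmn a b /\ lcmn a b < a * b.
Proof.
move=> ha hb Hc.
have L0 : 0 < lcmn a b by rewrite lcmn_gt0 ha hb.
have G0 : 0 < gcdn a b by rewrite gcdn_gt0 ha.
have G1 : gcdn a b != 1 by [].
have := muln_lcm_gcd a b; split => //; nia.
Qed.

Lemma p4p1 k n (hn : forall i, color_ok k i -> 0 < n i)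
  (P4 : right_LCM_monoid k n) i j :
  i < j -> color_ok k i -> color_ok k j -> coprime (n i) (n j).
Proof.
move=> Hij Hi Hj; apply/idPn => Hnc.
have hi := hn _ Hi; have hj := hn _ Hj.
have [L0 L1] := lcm_facts hi hj Hnc.
set L := lcmn (n i) (n j) in L0 L1.
have Vmu : valid_word k n [:: (i, 0)] by rewrite /valid_word /= /valid_gen /= Hi hi.
have Vnu : valid_word k n [:: (j, 0)] by rewrite /valid_word /= /valid_gen /= Hj hj.
set m0 := [:: (i, 0); (j, 0)].
have Vm0 : valid_word k n m0 by rewrite /valid_word /= /valid_gen /= Hi Hj hi hj.
have H0 : right_common_multiple k n m0 [:: (i, 0)] [:: (j, 0)].
  split => //.
    by exists [:: (j, 0)]; [exact: Vnu | exact: meq_refl].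
  exists [:: (i, 0)] => //.
  by apply/(meq2 hn) => //; rewrite !muln0.
have Aij : all (color_ok k) [:: i; j] by rewrite /= Hi Hj.
set m1 := mk n [:: i; j] L.
have Vm1 : valid_word k n m1 by apply: valid_mk.
have Nm1 : Nv n m1 = L by rewrite (Nv_mk hn) // !Pc_cons Pc_nil muln1.
have H1 : right_common_multiple k n m1 [:: (i, 0)] [:: (j, 0)].
  split => //.
    apply/(rm_char hn Vm1 Vmu); split.
      by move=> x; rewrite cols_mk /=; lia.
    rewrite Nm1 /= Pc_cons Pc_nil !muln0 muln1 addn0; apply/eqP; exact: dvdn_lcml.
  apply/(rm_char hn Vm1 Vnu); split.
    by move=> x; rewrite cols_mk /=; lia.
  rewrite Nm1 /= Pc_cons Pc_nil !muln0 muln1 addn0; apply/eqP; exact: dvdn_lcmr.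
have [l [[Vl Rl1 Rl2] Hlcm]] := P4 _ _ Vmu Vnu (ex_intro _ m0 H0).
have [C0 E0] := (rm_char hn Vm0 Vl).1 (Hlcm _ H0).
have [C1 E1] := (rm_char hn Vm1 Vl).1 (Hlcm _ H1).
have [D1 _] := (rm_char hn Vl Vmu).1 Rl1.
have [D2 _] := (rm_char hn Vl Vnu).1 Rl2.
have P : perm_eq (cols l) [:: i; j].
  apply: perm_counts => x; apply/eqP; rewrite eqn_leq.
  have := C0 x; have := D1 x; have := D2 x; rewrite /= => h2 h1 h0.
  rewrite h0 /=.
  case: (eqVneq i x) h1 h2 => [<-|hix] h1 h2.
    by rewrite (gtn_eqF Hij).
  done.
move: E0 E1; rewrite (Pc_perm n P) !Pc_cons Pc_nil muln1 Nm1 /= => E0 E1.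
move: E0 E1; rewrite !muln0 addn0 mod0n => <-; rewrite modn_small // => E1.
by rewrite E1 in L0.
Qed.

Lemma p1p2 k n (hn : forall i, color_ok k i -> 0 < n i)
  (hcop : forall i j, color_ok k i -> color_ok k j -> i != j -> coprime (n i) (n j))
  i j s t' : i < j -> color_ok k i -> color_ok k j ->
  s < n i -> t' < n j ->
  exists! st : nat * nat,
    [/\ st.1 < n i, st.2 < n j &
        meq k n [:: (i, s); (j, st.2)] [:: (j, t'); (i, st.1)]].
Proof.
move=> Hij Hi Hj Hs Ht.
have hi := hn _ Hi; have hj := hn _ Hj.
have cop : coprime (n i) (n j) by apply: hcop => //; rewrite neq_ltn Hij.
have pos : 0 < n i * n j by rewrite muln_gt0 hi.
set N := chinese (n i) (n j) s t' %% (n i * n j).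
have NL : N < n i * n j by rewrite ltn_pmod.
have Ni : N %% n i = s.
  rewrite /N (modn_dvdm _ (dvdn_mulr _ (dvdnn _))) chinese_modl // modn_small //.
have Nj : N %% n j = t'.
  rewrite /N (modn_dvdm _ (dvdn_mull _ (dvdnn _))) chinese_modr // modn_small //.
have char : forall a b, a < n i -> b < n j ->
    meq k n [:: (i, s); (j, b)] [:: (j, t'); (i, a)] ->
    s + n i * b = N /\ t' + n j * a = N.
  move=> a b Ha Hb /(meq2 hn Hij Hi Hj Hs Hb Ht Ha) E.
  have ML : s + n i * b < n i * n j.
    apply: (@leq_trans (n i + n i * b)); first by rewrite ltn_add2r.
    by rewrite -mulnS leq_mul2l Hb orbT.
  have M1 : (s + n i * b) %% n i = s by rewrite addnC mulnC modnMDl modn_small.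
  have M2 : (s + n i * b) %% n j = t' by rewrite E addnC mulnC modnMDl modn_small.
  suff H : s + n i * b = N by split; [| rewrite -E].
  have := chinese_remainder cop (s + n i * b) N.
  rewrite M1 M2 Ni Nj !eqxx /= => /eqP.
  by rewrite !modn_small.
exists (N %/ n j, N %/ n i); split.
  split => /=.
  - by rewrite ltn_divLR.
  - by rewrite ltn_divLR // mulnC.
  - apply/(meq2 hn) => //; try (rewrite ltn_divLR //; first [done | by rewrite mulnC]).
    rewrite -{1}Ni -{1}Nj (mulnC (n i)) (mulnC (n j)) addnC -divn_eq.
    by rewrite addnC -divn_eq.
move=> [a b] [/= Ha Hb M].
have [E1 E2] := char a b Ha Hb M.
have F1 : s + n i * (N %/ n i) = N by rewrite -{1}Ni mulnC addnC -divn_eq.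
have F2 : t' + n j * (N %/ n j) = N by rewrite -{1}Nj mulnC addnC -divn_eq.
have [_ e1] := digits_eq Hs Hs (etrans F1 (esym E1)).
have [_ e2] := digits_eq Ht Ht (etrans F2 (esym E2)).
by rewrite e1 e2.
Qed.

Lemma p2p1 k n (hn : forall i, color_ok k i -> 0 < n i)
  (P2 : forall i j s t', i < j -> color_ok k i -> color_ok k j ->
              s < n i -> t' < n j ->
              exists! st : nat * nat,
                [/\ st.1 < n i, st.2 < n j &
                    meq k n [:: (i, s); (j, st.2)] [:: (j, t'); (i, st.1)]])
  i j : i < j -> color_ok k i -> color_ok k j -> coprime (n i) (n j).
Proof.
move=> Hij Hi Hj; apply/idPn => Hnc.
have hi := hn _ Hi; have hj := hn _ Hj.
have [L0 L1] := lcm_facts hi hj Hnc.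
set L := lcmn (n i) (n j) in L0 L1.
have [st [_ U]] := P2 i j 0 0 Hij Hi Hj hi hj.
have e0 := U (0, 0) (And3 hi hj (proj2 (meq2 hn Hij Hi Hj hi hj hj hi) ltac:(by rewrite !muln0))).
have B1 : L %/ n j < n i by rewrite ltn_divLR.
have B2 : L %/ n i < n j by rewrite ltn_divLR // mulnC.
have e1 := U (L %/ n j, L %/ n i).
have : (0, 0) = (L %/ n j, L %/ n i).
  rewrite -e0 e1 //; split => //=.
  apply/(meq2 hn) => //.
  rewrite !add0n mulnC divnK ?dvdn_lcml // mulnC divnK ?dvdn_lcmr //.
case=> _ /esym H.
have := divnK (dvdn_lcml (n i) (n j)); rewrite -/L H mul0n => HL.
by rewrite -HL in L0.
Qed.

Lemma sym_cop k n
  (H : forall i j, i < j -> color_ok k i -> color_ok k j -> coprime (n i) (n j)) :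
  forall i j, color_ok k i -> color_ok k j -> i != j -> coprime (n i) (n j).
Proof.
move=> i j Hi Hj; case: (ltngtP i j) => // h _; first exact: H.
rewrite coprime_sym; exact: H.
Qed.

Theorem mainTheorem5 (k : option nat) (n : nat -> nat)
  (hk : if k is Some k' then 0 < k' else true)
  (hn : forall i, color_ok k i -> 0 < n i) :
  let P1 := forall i j, color_ok k i -> color_ok k j -> i != j ->
              coprime (n i) (n j) in
  let P2 := forall i j s t', i < j -> color_ok k i -> color_ok k j ->
              s < n i -> t' < n j ->
              exists! st : nat * nat,
                [/\ st.1 < n i, st.2 < n j &
                    meq k n [:: (i, s); (j, st.2)] [:: (j, t'); (i, st.1)]] in
  let P3 := forall mu nu, valid_word k n mu -> valid_word k n nu ->
              (exists m, right_common_multiple k n m mu nu) ->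
              exists l, [/\ right_lcm k n l mu nu,
                (forall l', right_lcm k n l' mu nu -> meq k n l' l) &
                (forall i, deg l i = maxn (deg mu i) (deg nu i))] in
  let P4 := right_LCM_monoid k n in
  [/\ P1 <-> P2, P1 <-> P3 & P1 <-> P4].
Proof.
cbv zeta.
have h34 : (forall mu nu, valid_word k n mu -> valid_word k n nu ->
              (exists m, right_common_multiple k n m mu nu) ->
              exists l, [/\ right_lcm k n l mu nu,
                (forall l', right_lcm k n l' mu nu -> meq k n l' l) &
                (forall i, deg l i = maxn (deg mu i) (deg nu i))]) ->
           right_LCM_monoid k n.
  move=> H mu nu A B C; have [l [R _ _]] := H mu nu A B C; by exists l.
split; split.
- move=> hcop i j s t'; exact: p1p2.
- move=> P2; apply: sym_cop => i j; exact: p2p1.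
- move=> hcop mu nu; exact: p1p3.
- move=> P3; apply: sym_cop => i j; apply: p4p1 => //; exact: h34.
- move=> hcop; apply: h34 => mu nu; exact: p1p3.
- move=> P4; apply: sym_cop => i j; exact: p4p1.
Qed.
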